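(* Let $\Theta_{3,5,5}$ be the graph consisting of two vertices joined by three internally vertex-disjoint paths of lengths $3$, $5$ and $5$. Then $\mathrm{ex}(n,\Theta_{3,5,5})=\Omega(n^{5/4})$.
   Context: For a graph $H$, $\mathrm{ex}(n,H)$ denotes the maximum number of edges in a graph on $n$ vertices that contains no subgraph isomorphic to $H$. *)

(* Defs.v *)
From mathcomp Require Import all_boot.
From Stdlib Require Import Reals.
Set Implicit Arguments. Unset Strict Implicit. Unset Printing Implicit Defensive.

(* A (finite simple) graph on a finite vertex type V is given by its edge set:
   a set of 2-element subsets of V. *)
Definition simple_graph (V : finType) (G : {set {set V}}) : bool :=
  [forall e in G, #|e| == 2].

Definition nedges (V : finType) (G : {set {set V}}) : nat := #|G|.

Definition contains_subgraph (V W : finType) (G : {set {set V}}) (H : {set {set W}}) : bool :=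
  [exists f : {ffun W -> V}, injectiveb f && [forall e in H, (f @: e) \in G]].

Definition ex (n : nat) (W : finType) (H : {set {set W}}) : nat :=
  \max_(G : {set {set 'I_n}} | simple_graph G && ~~ contains_subgraph G H) nedges G.

(* Theta_{3,5,5} on vertex set 'I_12: endpoints 0 and 1,
   path of length 3: 0-2-3-1, paths of length 5: 0-4-5-6-7-1 and 0-8-9-10-11-1. *)
Definition theta355_edge_list : seq (nat * nat) :=
  [:: (0,2); (2,3); (3,1);
      (0,4); (4,5); (5,6); (6,7); (7,1);
      (0,8); (8,9); (9,10); (10,11); (11,1)].

Definition Theta355 : {set {set 'I_12}} :=
  [set:: map (fun p : nat * nat => [set (inord p.1 : 'I_12); inord p.2]) theta355_edge_list].

(* Main.v *)
Require Import Defs.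
From mathcomp Require Import all_boot.
From Stdlib Require Import Reals.
From Stdlib Require Import Lra.
From mathcomp Require Import all_boot all_algebra all_field ring zify.
Import GRing.Theory.
Set Implicit Arguments. Unset Strict Implicit. Unset Printing Implicit Defensive.


Section W.
Local Open Scope ring_scope.
Variable F : fieldType.
Definition pt := (F * F * F * F)%type.
Definition nb (p : pt) (c : F) : pt :=
  (c, c * p.1.1.1 - p.1.1.2, c * p.1.1.1 ^+ 2 - p.1.2, c * p.1.1.1 ^+ 3 - p.2).
Definition P4f (p q : pt) (m b : F) : pt :=
  (p.1.1.1, p.1.1.2 - (b - m) * (q.1.1.1 - p.1.1.1),
   p.1.2 - (b - m) * (q.1.1.1 ^+ 2 - p.1.1.1 ^+ 2),
   p.2 - (b - m) * (q.1.1.1 ^+ 3 - p.1.1.1 ^+ 3)).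

Lemma solve_sub (x y z w : F) : x - y = z - w -> w = z - x + y.
Proof. move=> H; have ->: w = z - (z - w) by ring. rewrite -H; ring. Qed.

Lemma lin (A B C D : F) : A = B -> (C - D = A - B \/ C - D = B - A) -> C = D.
Proof.
move=> H [] E; apply/eqP; rewrite -subr_eq0 E H subrr //.
Qed.

Lemma key (a s t r x y b : F) :
 x != 0 -> y != 0 -> b != 0 -> r != a -> r != t -> s != a ->
 x*(t - a) + y*(r - a) = b*(s - a) ->
 x*(t^+2 - a^+2) + y*(r^+2 - a^+2) = b*(s^+2 - a^+2) ->
 x*(t^+3 - a^+3) + y*(r^+3 - a^+3) = b*(s^+3 - a^+3) ->
 [/\ t = a, s = r & y = b].
Proof.
move=> x0 y0 b0 ra rt sa H1 H2 H3.
move/eqP: H1; rewrite -subr_eq0 => /eqP H1.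
move/eqP: H2; rewrite -subr_eq0 => /eqP H2.
move/eqP: H3; rewrite -subr_eq0 => /eqP H3.
set E1 := (X in X = 0) in H1.
set E2 := (X in X = 0) in H2.
set E3 := (X in X = 0) in H3.
have Lt : x*(t-a)*(t-r)*(t-s) = E3 - (a+r+s)*E2 + (a*r+a*s+r*s)*E1.
  rewrite /E1 /E2 /E3; ring.
have Lr : y*(r-a)*(r-t)*(r-s) = E3 - (a+t+s)*E2 + (a*t+a*s+t*s)*E1.
  rewrite /E1 /E2 /E3; ring.
rewrite H1 H2 H3 !mulr0 subr0 addr0 in Lt Lr.
have rs : r = s.
  move/eqP: Lr; rewrite !mulf_eq0 (negbTE y0) !subr_eq0 (negbTE ra).
  by rewrite (negbTE rt) /= => /eqP.
subst s.
have ta : t = a.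
  move/eqP: Lt; rewrite !mulf_eq0 (negbTE x0) !subr_eq0 [t == r]eq_sym (negbTE rt).
  by rewrite !orbF /= => /eqP.
subst t; split => //.
have : (y - b) * (r - a) = 0 by rewrite -H1 /E1; ring.
move/eqP; rewrite mulf_eq0 subr_eq0 (negbTE (_ : r - a != 0)) ?orbF; first by move/eqP.
by rewrite subr_eq0.
Qed.

Lemma P4form (p q p2 p4 : pt) (m b b1 b3 : F) :
  nb p m = nb q m -> nb q b = nb p4 b -> nb p b1 = nb p2 b1 -> nb p2 b3 = nb p4 b3 ->
  p != q -> nb q m != nb q b -> p != p2 -> nb p2 b1 != nb p2 b3 -> p2 != p4 ->
  nb p4 b3 != nb p4 b -> p4 = P4f p q m b.
Proof.
case: p => [[[a p1] p2'] p3]; case: q => [[[s q1] q2] q3].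
case: p2 => [[[r u1] u2] u3]; case: p4 => [[[t v1] v2] v3].
rewrite /nb /P4f /=.
case=> /solve_sub E1 /solve_sub E2 /solve_sub E3; subst q1 q2 q3.
case=> /solve_sub E1 /solve_sub E2 /solve_sub E3; subst v1 v2 v3.
case=> /solve_sub E1 /solve_sub E2 /solve_sub E3; subst u1 u2 u3.
case=> /esym /solve_sub E1 /esym /solve_sub E2 /esym /solve_sub E3.
move=> Hpq HML Hpp2 HL13 Hp24 HL3.
have sa : s != a.
  apply: contraNneq Hpq => sa; subst s; apply/eqP; congr (_,_,_,_); ring.
have bm : b - m != 0.
  rewrite subr_eq0; apply: contraNneq HML => bm; subst b; apply/eqP; congr (_,_,_,_); ring.
have ra : r != a.
  apply: contraNneq Hpp2 => ra; subst r; apply/eqP; congr (_,_,_,_); ring.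
have y0 : b3 - b1 != 0.
  rewrite subr_eq0; apply: contraNneq HL13 => bb; subst b3; apply/eqP; congr (_,_,_,_); ring.
have rt : r != t.
  apply: contraNneq Hp24 => rt; subst r; apply/eqP; congr (_,_,_,_); [apply: (lin E1) | apply: (lin E2) | apply: (lin E3)]; (left; ring) || (right; ring).
have x0 : b - b3 != 0.
  rewrite subr_eq0; apply: contraNneq HL3 => bb; subst b3; apply/eqP; congr (_,_,_,_); ring.
have K1 : (b - b3)*(t - a) + (b3 - b1)*(r - a) = (b - m)*(s - a).
  by apply: (lin E1); (left; ring) || (right; ring).
have K2 : (b - b3)*(t^+2 - a^+2) + (b3 - b1)*(r^+2 - a^+2) = (b - m)*(s^+2 - a^+2).
  by apply: (lin E2); (left; ring) || (right; ring).
have K3 : (b - b3)*(t^+3 - a^+3) + (b3 - b1)*(r^+3 - a^+3) = (b - m)*(s^+3 - a^+3).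
  by apply: (lin E3); (left; ring) || (right; ring).
have [ta sr yb] := key x0 y0 bm ra rt sa K1 K2 K3.
subst t s.
have -> : b = b3 - b1 + m by rewrite yb; ring.
congr (_,_,_,_); ring.
Qed.

Definition V := (bool * pt)%type.
Definition Adj (u v : V) : Prop :=
  exists p c, (u = (true, p) /\ v = (false, nb p c)) \/ (v = (true, p) /\ u = (false, nb p c)).

Lemma Adj_sym u v : Adj u v -> Adj v u.
Proof. by case=> p [c [[E1 E2]|[E1 E2]]]; exists p, c; [right|left]. Qed.

Lemma adjP p v : Adj (true, p) v -> exists c, v = (false, nb p c).
Proof. by case=> p' [c [[[<-] ->]|[_ E]]]; [exists c|]. Qed.

Lemma adjL l v : Adj (false, l) v -> exists q, v = (true, q) /\ l = nb q l.1.1.1.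
Proof. by case=> p' [c [[E _]|[-> [->]]]] //; exists p'. Qed.

Lemma five p q m b (w0 w2 w3 w1 w4 w5 w6 w7 : V) :
 w0 = (true,p) -> w2 = (false, nb p m) -> w3 = (true,q) -> w1 = (false, nb q b) ->
 nb p m = nb q m ->
 Adj w0 w4 -> Adj w4 w5 -> Adj w5 w6 -> Adj w6 w7 -> Adj w7 w1 ->
 w0 != w3 -> w2 != w1 -> w0 != w5 -> w4 != w6 -> w5 != w7 -> w6 != w1 ->
 w7 = (true, P4f p q m b).
Proof.
move=> -> -> -> -> Epq A04 A45 A56 A67 A71 H03 H21 H05 H46 H57 H61.
have [b1 E4] := adjP A04; subst w4.
have [p2 [E5 Ep2]] := adjL A45; subst w5; rewrite /= in Ep2.
have [b3 E6] := adjP A56; subst w6.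
have [p4 [E7 Ep4]] := adjL A67; subst w7; rewrite /= in Ep4.
have [p4' [[Ep4e] Ep4']] := adjL (Adj_sym A71); rewrite /= in Ep4'; subst p4'.
congr (_, _); apply: (@P4form p q p2 p4 m b b1 b3) => //.
all: first [ by apply: contraNneq H03 => ->
           | by apply: contraNneq H21 => E; rewrite Epq E
           | by apply: contraNneq H05 => ->
           | by apply: contraNneq H46 => E; rewrite Ep2 E
           | by apply: contraNneq H57 => ->
           | by apply: contraNneq H61 => E; rewrite Ep4 Ep4' E ].
Qed.

Lemma theta_core (w : nat -> V) :
  (forall i j, (i, j) \in theta355_edge_list -> Adj (w i) (w j)) ->
  (forall i j, (i < 12)%N -> (j < 12)%N -> i != j -> w i != w j) -> False.
Proof.
move=> A D.
have A' : forall i j, (i, j) \in theta355_edge_list -> Adj (w j) (w i).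
  by move=> i j /A /Adj_sym.
case E0: (w 0%N) => [[] p].
- have := A 0 2 isT; rewrite E0 => /adjP [m E2].
  have := A 2 3 isT; rewrite E2 => /adjL [q [E3 Eq]]; rewrite /= in Eq.
  have := A 3 1 isT; rewrite E3 => /adjP [b E1].
  have H7 := five E0 E2 E3 E1 Eq (A 0 4 isT) (A 4 5 isT) (A 5 6 isT) (A 6 7 isT) (A 7 1 isT)
    (D 0 3 isT isT isT) (D 2 1 isT isT isT) (D 0 5 isT isT isT) (D 4 6 isT isT isT)
    (D 5 7 isT isT isT) (D 6 1 isT isT isT).
  have H11 := five E0 E2 E3 E1 Eq (A 0 8 isT) (A 8 9 isT) (A 9 10 isT) (A 10 11 isT) (A 11 1 isT)
    (D 0 3 isT isT isT) (D 2 1 isT isT isT) (D 0 9 isT isT isT) (D 8 10 isT isT isT)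
    (D 9 11 isT isT isT) (D 10 1 isT isT isT).
  by move: (D 7 11 isT isT isT); rewrite H7 H11 eqxx.
- have := A 0 2 isT; rewrite E0 => /adjL [q [E2 El]].
  have := A 2 3 isT; rewrite E2 => /adjP [c E3].
  have := A 3 1 isT; rewrite E3 => /adjL [p' [E1 Ec]]; rewrite /= in Ec.
  have E3' : w 3%N = (false, nb p' c) by rewrite E3 Ec.
  have E0' : w 0%N = (false, nb q p.1.1.1) by rewrite E0 {1}El.
  have H4 := five E1 E3' E2 E0' (esym Ec) (A' 7 1 isT) (A' 6 7 isT) (A' 5 6 isT) (A' 4 5 isT) (A' 0 4 isT)
    (D 1 2 isT isT isT) (D 3 0 isT isT isT) (D 1 6 isT isT isT) (D 7 5 isT isT isT)
    (D 6 4 isT isT isT) (D 5 0 isT isT isT).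
  have H8 := five E1 E3' E2 E0' (esym Ec) (A' 11 1 isT) (A' 10 11 isT) (A' 9 10 isT) (A' 8 9 isT) (A' 0 8 isT)
    (D 1 2 isT isT isT) (D 3 0 isT isT isT) (D 1 10 isT isT isT) (D 11 9 isT isT isT)
    (D 10 8 isT isT isT) (D 9 0 isT isT isT).
  by move: (D 4 8 isT isT isT); rewrite H4 H8 eqxx.
Qed.
End W.

Lemma set2_eq (T : finType) (a b c d : T) : [set a; b] = [set c; d] -> a != b ->
  (a = c /\ b = d) \/ (a = d /\ b = c).
Proof.
move=> E ab.
have : a \in [set c; d] by rewrite -E !inE eqxx.
have : b \in [set c; d] by rewrite -E !inE eqxx orbT.
rewrite !inE => /orP [] /eqP Hb /orP [] /eqP Ha; subst.
- by rewrite eqxx in ab.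
- by right.
- by left.
- by rewrite eqxx in ab.
Qed.

Section Fin.
Variable F : finFieldType.
Variable n : nat.
Hypothesis Hn : (#|{: V F}| <= n)%N.

Definition gv (v : V F) : 'I_n := widen_ord Hn (enum_rank v).
Lemma gv_inj : injective gv.
Proof. by move=> u v /(congr1 val) /= /val_inj /enum_rank_inj. Qed.

Definition edge (x : pt F * F) : {set 'I_n} := [set gv (true, x.1); gv (false, nb x.1 x.2)].
Definition Gw : {set {set 'I_n}} := [set edge x | x : pt F * F].

Lemma gv_tf p l : gv (true, p) != gv (false, l).
Proof. by rewrite (inj_eq gv_inj). Qed.

Lemma edge_inj : injective edge.
Proof.
move=> [p c] [p' c'] /set2_eq [||] //=; first exact: gv_tf.
- by move=> [/gv_inj [->] /gv_inj [->]].
- by move=> [/eqP]; rewrite (negbTE (gv_tf _ _)).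
Qed.

Lemma Gw_simple : simple_graph Gw.
Proof.
apply/forallP => e; apply/implyP => /imsetP [x _ ->].
by rewrite cards2 gv_tf.
Qed.

Lemma Gw_size : nedges Gw = (#|F| ^ 5)%N.
Proof.
rewrite /nedges /Gw card_imset; last exact: edge_inj.
by rewrite cardT -cardE !card_prod !expnS expn0 muln1 !mulnA.
Qed.

Lemma Gw_free : ~~ contains_subgraph Gw Theta355.
Proof.
apply/negP => /existsP [f /andP [/injectiveP finj /forallP Hf]].
pose h (i : 'I_12) : V F := odflt (true, (0%R, 0%R, 0%R, 0%R)) [pick v | gv v == f i].
have hP i v : f i = gv v -> h i = v.
  rewrite /h => Efi; case: pickP => [v' /eqP Ev|/(_ v)]; last by rewrite Efi eqxx.
  by apply: gv_inj; rewrite Ev.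
have Lall : all (fun p : nat * nat => [&& (p.1 < 12)%N, (p.2 < 12)%N & p.1 != p.2]) theta355_edge_list by [].
have Eg : forall i j, (i, j) \in theta355_edge_list ->
   [/\ gv (h (inord i)) = f (inord i), gv (h (inord j)) = f (inord j) & Adj (h (inord i)) (h (inord j))].
  move=> i j ij.
  have /and3P [i12 j12 nij] := allP Lall _ ij.
  have : [set inord i; inord j] \in Theta355 by rewrite /Theta355 inE; by apply/mapP; exists (i, j).
  move/(implyP (Hf _)); rewrite imsetU1 imset_set1 => /imsetP [[p c] _ /set2_eq []].
  + apply: contra nij => /eqP /finj /(congr1 val) /=; rewrite !inordK // => ->; exact: eqxx.
  + move=> [Ei Ej]; rewrite (hP _ _ Ei) (hP _ _ Ej) Ei Ej; split => //; exists p, c; left; split => //.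
  + move=> [Ei Ej]; rewrite (hP _ _ Ei) (hP _ _ Ej) Ei Ej; split => //; exists p, c; right; split => //.
have Cov : forall k, (k < 12)%N -> gv (h (inord k)) = f (inord k).
  move=> k k12.
  have : all (fun k => has (fun p : nat * nat => (p.1 == k) || (p.2 == k)) theta355_edge_list) (iota 0 12) by [].
  move/allP/(_ k); rewrite mem_iota leq0n add0n k12 => /(_ isT) Hk.
  have [[i j] ij /= /orP [] /eqP Ek] := hasP Hk; subst k; by case: (Eg _ _ ij).
apply: (@theta_core _ (fun k => h (inord k))).
- by move=> i j ij; case: (Eg _ _ ij).
- move=> i j i12 j12 nij; apply/negP => /eqP E.
  have := congr1 gv E; rewrite !Cov // => /finj /(congr1 val) /=; rewrite !inordK // => ij.
  by rewrite ij eqxx in nij.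
Qed.

Lemma ex_ge : (#|F| ^ 5 <= ex n Theta355)%N.
Proof.
rewrite -Gw_size /ex.
by apply: (@leq_bigmax_cond _ (fun G => simple_graph G && ~~ contains_subgraph G Theta355)); rewrite Gw_simple Gw_free.
Qed.
End Fin.

Lemma ex_ge_pow2 (n k : nat) : (0 < k)%N -> (2 * 16 ^ k <= n)%N -> (2 ^ (5 * k) <= ex n Theta355)%N.
Proof.
move=> k0 Hn.
have [F _ cardF] := @pPrimePowerField 2 k isT k0.
have HV : (#|{: V F}| <= n)%N.
  by rewrite !card_prod card_bool cardF -!expnMn.
have := ex_ge HV; rewrite cardF -expnM mulnC.
by [].
Qed.


Local Close Scope ring_scope.
Delimit Scope R_scope with R.
From Stdlib Require Import Lra.

Lemma INR_expn m e : INR (m ^ e) = (INR m ^ e)%R.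
Proof. elim: e => [|e IH]; first by []. by rewrite expnS -multE mult_INR IH. Qed.

Lemma arith n : (32 <= n)%N -> exists k, [/\ (0 < k)%N, (2 * 16 ^ k <= n)%N & (n ^ 5 < (128 * 2 ^ (5 * k)) ^ 4)%N].
Proof.
move=> n32; set k := trunc_log 16 (n %/ 2).
have h1 : (16 ^ k <= n %/ 2)%N by apply: trunc_logP => //; lia.
have h2 : (n %/ 2 < 16 ^ k.+1)%N by apply: trunc_log_ltn.
have k0 : (0 < k)%N by apply: trunc_log_max => //; rewrite expn1; lia.
exists k; split => //; first lia.
have h3 : (n < 32 * 16 ^ k)%N by move: h2; rewrite expnS; lia.
apply: (@leq_trans ((32 * 16 ^ k) ^ 5)); first by rewrite ltn_exp2r.
have -> : ((32 * 16 ^ k) ^ 5 = 2 ^ (25 + 20 * k))%N.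
  by rewrite -[32]/(2^5) -[16]/(2^4) -expnM -expnD -expnM; congr (2 ^ _); lia.
have -> : ((128 * 2 ^ (5 * k)) ^ 4 = 2 ^ (28 + 20 * k))%N.
  by rewrite -[128]/(2^7) -expnD -expnM; congr (2 ^ _); lia.
by rewrite leq_exp2l //; lia.
Qed.

Lemma real_part (n e k : nat) : (0 < n)%N -> (n ^ 5 < (128 * k) ^ 4)%N -> (k <= e)%N ->
  (/ 128 * Rpower (INR n) (5 / 4) <= INR e)%R.
Proof.
move=> n0 Hlt Hke.
have Xpos : (0 < Rpower (INR n) (5 / 4))%R by apply: exp_pos.
have npos : (0 < INR n)%R by apply: lt_0_INR; apply/ltP.
have X4 : (Rpower (INR n) (5 / 4) ^ 4 = INR n ^ 5)%R.
  rewrite -(Rpower_pow 4 _ Xpos) Rpower_mult -(Rpower_pow 5 _ npos); f_equal; simpl; lra.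
have H128 : INR 128 = 128%R by rewrite INR_IZR_INZ.
have HX : (Rpower (INR n) (5 / 4) <= INR (128 * k))%R.
  apply: Rnot_lt_le => HX.
  have : (INR (128 * k) ^ 4 <= Rpower (INR n) (5 / 4) ^ 4)%R.
    by apply: pow_incr; split; [apply: pos_INR | lra].
  rewrite X4 -!INR_expn => /INR_le /leP; rewrite leqNgt Hlt //.
have HK : (INR k <= INR e)%R by apply: le_INR; apply/leP.
rewrite -multE mult_INR H128 in HX.
have : (/ 128 * Rpower (INR n) (5 / 4) <= / 128 * (128 * INR k))%R.
  apply: Rmult_le_compat_l => //; lra.
have -> : (/ 128 * (128 * INR k) = INR k)%R by lra.
lra.
Qed.

Theorem proposition4p1 :
  exists (c : R) (N : nat), (0 < c)%R /\
    forall n : nat, (N <= n)%N ->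
      (c * Rpower (INR n) (5 / 4) <= INR (ex n Theta355))%R.
Proof.
exists (/ 128)%R, 32%N; split; first by apply: Rinv_0_lt_compat; lra.
move=> n n32.
have [k [k0 Hn Hlt]] := arith n32.
apply: (real_part _ Hlt (ex_ge_pow2 k0 Hn)).
by apply: leq_trans n32.
Qed.
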